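(* Let $\mathcal H$ be a finite-dimensional Hilbert space, let $P$ be an orthogonal projection on $\mathcal H$, and let $\mathcal E$ be a channel on $\mathcal L(\mathcal H)$ with operation elements $\{E_a\}$, i.e. $\mathcal E(\rho)=\sum_a E_a\rho E_a^\dagger$ with $\sum_a E_a^\dagger E_a={\bf 1}$. Let $\mathcal A$ be a subalgebra of $\mathcal L(P\mathcal H)$ closed under Hermitian conjugation, where operators on $P\mathcal H$ are regarded as operators $X$ on $\mathcal H$ with $X=PXP$ ($\mathcal A$ need not contain $P$). Then $\mathcal A$ is correctable for $\mathcal E$ on states in $P\mathcal H$, i.e. there exists a channel $\mathcal R$ on $\mathcal L(\mathcal H)$ such that $$P\,(\mathcal R\circ\mathcal E)^\dagger(X)\,P = PXP\quad\text{for all }X\in\mathcal A,$$ if and only if $$[P E_c^\dagger E_b P,\, X]=0\quad\text{for all } X\in\mathcal A \text{ and all indices } b,c.$$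
   Context: $\mathcal L(\mathcal K)$ denotes the set of all linear operators on a Hilbert space $\mathcal K$. A channel is a completely positive trace-preserving linear map on $\mathcal L(\mathcal H)$; for a channel $\mathcal F(\rho)=\sum_a F_a\rho F_a^\dagger$ its dual (Heisenberg-picture) map is $\mathcal F^\dagger(X)=\sum_a F_a^\dagger X F_a$, characterized by $\mathrm{Tr}(\rho\,\mathcal F^\dagger(X))=\mathrm{Tr}(\mathcal F(\rho)X)$; in particular $(\mathcal R\circ\mathcal E)^\dagger=\mathcal E^\dagger\circ\mathcal R^\dagger$. *)

(* Defs.v *)
(* Finite-dimensional Hilbert space H = C^n, with
   C an arbitrary numClosedFieldType (e.g. the complex numbers). *)
From HB Require Import structures.
From mathcomp Require Import all_boot all_order all_algebra.
Set Implicit Arguments. Unset Strict Implicit. Unset Printing Implicit Defensive.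
Import Order.TTheory GRing.Theory Num.Theory.
Local Open Scope ring_scope.

Section Defs.
Variable C : numClosedFieldType.

Definition hc {m k : nat} (A : 'M[C]_(m, k)) : 'M[C]_(k, m) :=
  (map_mx Num.conj A)^T.

Definition orth_proj {n} (P : 'M[C]_n) : Prop := P *m P = P /\ hc P = P.

(* Positive semidefiniteness of a k x k block matrix with n x n blocks,
   i.e. of an element of M_k(L(H)) = L(C^k (x) H) *)
Definition psd_block {n k : nat} (B : 'I_k -> 'I_k -> 'M[C]_n) : Prop :=
  forall v : 'I_k -> 'cV[C]_n,
    0 <= \sum_(i < k) \sum_(j < k) (hc (v i) *m B i j *m v j) 0 0.

Definition completely_positive {n} (Phi : 'M[C]_n -> 'M[C]_n) : Prop :=
  forall (k : nat) (B : 'I_k -> 'I_k -> 'M[C]_n),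
    psd_block B -> psd_block (fun i j => Phi (B i j)).

Definition trace_preserving {n} (Phi : 'M[C]_n -> 'M[C]_n) : Prop :=
  forall X, \tr (Phi X) = \tr X.

Definition channel {n} (Phi : 'M[C]_n -> 'M[C]_n) : Prop :=
  linear Phi /\ completely_positive Phi /\ trace_preserving Phi.

Definition kraus_map {n m} (E : 'I_m -> 'M[C]_n) (rho : 'M[C]_n) : 'M[C]_n :=
  \sum_(a < m) E a *m rho *m hc (E a).

(* Heisenberg-picture dual: the unique map with
   Tr(rho * dual Phi X) = Tr(Phi rho * X) for all rho, X
   (entry (j,i) equals Tr(Phi(e_ij) X)). *)
Definition dual {n} (Phi : 'M[C]_n -> 'M[C]_n) (X : 'M[C]_n) : 'M[C]_n :=
  \matrix_(j, i) \tr (Phi (delta_mx i j) *m X).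

Definition star_subalgebra_of {n} (P : 'M[C]_n) (A : 'M[C]_n -> Prop) : Prop :=
  [/\ A 0 /\ (forall X Y, A X -> A Y -> A (X + Y)),
      (forall (c : C) X, A X -> A (c *: X)),
      (forall X Y, A X -> A Y -> A (X *m Y)),
      (forall X, A X -> A (hc X)) &
      (forall X, A X -> X = P *m X *m P)].

End Defs.

(* Main.v *)
Require Import Defs.
From mathcomp Require Import all_boot all_order all_algebra ring.
Set Implicit Arguments. Unset Strict Implicit. Unset Printing Implicit Defensive.
Import Order.TTheory GRing.Theory Num.Theory.
Local Open Scope ring_scope.

Section Basics.
Variable C : numClosedFieldType.

Lemma hcE m k (M : 'M[C]_(m, k)) i j : hc M i j = (M j i)^*.
Proof. by rewrite /hc !mxE. Qed.

Lemma hcK m k (M : 'M[C]_(m, k)) : hc (hc M) = M.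
Proof. by apply/matrixP => i j; rewrite !hcE conjCK. Qed.

Lemma hcM m k l (M : 'M[C]_(m, k)) (N : 'M[C]_(k, l)) :
  hc (M *m N) = hc N *m hc M.
Proof.
apply/matrixP => i j; rewrite /hc !mxE rmorph_sum; apply: eq_bigr => x _.
by rewrite /hc !mxE rmorphM mulrC.
Qed.

Lemma hcD m k (M N : 'M[C]_(m, k)) : hc (M + N) = hc M + hc N.
Proof. by apply/matrixP => i j; rewrite /hc !mxE rmorphD. Qed.

Lemma hcN m k (M : 'M[C]_(m, k)) : hc (- M) = - hc M.
Proof. by apply/matrixP => i j; rewrite /hc !mxE rmorphN. Qed.

Lemma hcB m k (M N : 'M[C]_(m, k)) : hc (M - N) = hc M - hc N.
Proof. by rewrite hcD hcN. Qed.

Lemma hcZ m k a (M : 'M[C]_(m, k)) : hc (a *: M) = a^* *: hc M.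
Proof. by apply/matrixP => i j; rewrite /hc !mxE rmorphM. Qed.

Lemma hc0 m k : hc (0 : 'M[C]_(m, k)) = 0.
Proof. by apply/matrixP => i j; rewrite /hc !mxE rmorph0. Qed.

Lemma hc1 m : hc (1%:M : 'M[C]_m) = 1%:M.
Proof.
apply/matrixP => i j; rewrite /hc !mxE eq_sym.
by rewrite conjC_nat.
Qed.

Lemma hc_sum m k (I : Type) (r : seq I) (Pr : pred I) (F : I -> 'M[C]_(m, k)) :
  hc (\sum_(i <- r | Pr i) F i) = \sum_(i <- r | Pr i) hc (F i).
Proof.
elim: r => [|x r IH]; first by rewrite !big_nil hc0.
rewrite !big_cons; case: (Pr x) => //; by rewrite hcD IH.
Qed.

Lemma tr_hc m (M : 'M[C]_m) : \tr (hc M) = (\tr M)^*.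
Proof.
rewrite /mxtrace rmorph_sum; apply: eq_bigr => i _; by rewrite hcE.
Qed.

Lemma hc_tstar m k (M : 'M[C]_(m, k)) : hc M = (M ^t* )%sesqui.
Proof. by apply/matrixP => i j; rewrite /hc !mxE. Qed.

Section Lin.
Variable n : nat.
Variable f : 'M[C]_n -> 'M[C]_n.
Hypothesis lf : linear f.

Lemma lin_add x y : f (x + y) = f x + f y.
Proof. by have := lf 1 x y; rewrite !scale1r. Qed.

Lemma lin0 : f 0 = 0.
Proof. by apply: (addrI (f 0)); rewrite -lin_add !addr0. Qed.

Lemma linZ a x : f (a *: x) = a *: f x.
Proof. by have := lf a x 0; rewrite !addr0 lin0 addr0. Qed.

Lemma linN x : f (- x) = - f x.
Proof. by rewrite -scaleN1r linZ scaleN1r. Qed.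

Lemma linB x y : f (x - y) = f x - f y.
Proof. by rewrite lin_add linN. Qed.

Lemma lin_sum (I : Type) (r : seq I) (Pr : pred I) (F : I -> 'M[C]_n) :
  f (\sum_(i <- r | Pr i) F i) = \sum_(i <- r | Pr i) f (F i).
Proof.
elim: r => [|x r IH]; first by rewrite !big_nil lin0.
rewrite !big_cons; case: (Pr x) => //; by rewrite lin_add IH.
Qed.

Lemma tr_delta_mul (i j : 'I_n) (D : 'M[C]_n) : \tr (delta_mx i j *m D) = D j i.
Proof.
rewrite /mxtrace (bigD1 i) //= big1 ?addr0.
  rewrite mxE (bigD1 j) //= big1 ?addr0; first by rewrite mxE !eqxx mul1r.
  by move=> k kj; rewrite mxE (negbTE kj) andbF mul0r.
move=> k ki; rewrite mxE big1 // => l _; by rewrite mxE (negbTE ki) mul0r.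
Qed.

Lemma dual_tr (rho X : 'M[C]_n) : \tr (rho *m dual f X) = \tr (f rho *m X).
Proof.
rewrite {2}(matrix_sum_delta rho) lin_sum mulmx_suml raddf_sum.
rewrite {1}(matrix_sum_delta rho) mulmx_suml raddf_sum.
apply: eq_bigr => i _.
rewrite lin_sum mulmx_suml raddf_sum mulmx_suml raddf_sum.
apply: eq_bigr => j _.
by rewrite linZ -!scalemxAl /= !mxtraceZ tr_delta_mul mxE.
Qed.

Lemma dual_unique (X D : 'M[C]_n) :
  (forall rho, \tr (rho *m D) = \tr (f rho *m X)) -> dual f X = D.
Proof.
move=> H; apply/matrixP => j i; rewrite mxE -H; by rewrite tr_delta_mul.
Qed.

End Lin.
End Basics.

Section Psd.
Variable C : numClosedFieldType.

Lemma lin_nonneg (al be c : C) :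
  (forall t, 0 <= c + t * be + t^* * al) -> al = 0 /\ be = 0.
Proof.
move=> H.
have c0 : 0 <= c by have := H 0; rewrite mul0r conjC0 mul0r !addr0.
have cr : c^* = c by rewrite geC0_conj.
have e1 : be^* + al^* = be + al.
  have := geC0_conj (H 1); rewrite conjC1 !mul1r !rmorphD /= cr -!addrA.
  by move=> /addrI.
have e2 : - 'i * be^* + 'i * al^* = 'i * be - 'i * al.
  have := geC0_conj (H ('i)); rewrite !rmorphD !rmorphM /= !conjCi !rmorphN /= conjCi opprK cr.
  rewrite -!addrA => /addrI ->; ring.
have ebe : be = al^*.
  have e2' : al^* - be^* = be - al.
    apply: (mulfI (neq0Ci C)); rewrite !mulrBr -e2; ring.
  have h2 : (2 : C) != 0 by rewrite pnatr_eq0.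
  apply: (mulfI h2).
  have -> : 2 * be = (be + al) + (be - al) by ring.
  rewrite -e1 -e2'; ring.
suff al0 : al = 0 by split => //; rewrite ebe al0 conjC0.
apply/eqP; apply/negP => /negP alN0.
have beN0 : be != 0 by rewrite ebe conjC_eq0.
have := H (- (c + 1) / be).
have -> : c + - (c + 1) / be * be + (- (c + 1) / be)^* * al = - (c + 2).
  have -> : (- (c + 1) / be)^* * al = (- (c + 1) / be * be)^*.
    by rewrite (rmorphM _ _ be) /= ebe conjCK.
  rewrite mulfVK // rmorphN rmorphD /= cr conjC1; ring.
rewrite oppr_ge0 => h.
have : 0 < c + 2 by apply: ltr_wpDl => //.
by move=> /lt_le_trans /(_ h); rewrite ltxx.
Qed.

Variable n : nat.

Definition sform k (B : 'I_k -> 'I_k -> 'M[C]_n) (v w : 'I_k -> 'cV[C]_n) : C :=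
  \sum_(i < k) \sum_(j < k) (hc (v i) *m B i j *m w j) 0 0.

Lemma psd_sform k (B : 'I_k -> 'I_k -> 'M[C]_n) :
  psd_block B -> forall v, 0 <= sform B v v.
Proof. by move=> H v; apply: H. Qed.

Lemma sform_expand k (B : 'I_k -> 'I_k -> 'M[C]_n) (v w : 'I_k -> 'cV[C]_n) t :
  sform B (fun i => w i + t *: v i) (fun i => w i + t *: v i) =
  sform B w w + t * sform B w v + t^* * sform B v w + t^* * t * sform B v v.
Proof.
rewrite /sform !mulr_sumr -!big_split /=; apply: eq_bigr => i _.
rewrite !mulr_sumr -!big_split /=; apply: eq_bigr => j _.
rewrite hcD hcZ !mulmxDl !mulmxDr -!scalemxAl -!scalemxAr !mxE.
ring.
Qed.

Lemma psd_kernel k (B : 'I_k -> 'I_k -> 'M[C]_n) (v : 'I_k -> 'cV[C]_n) :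
  psd_block B -> sform B v v = 0 ->
  forall w, sform B w v = 0 /\ sform B v w = 0.
Proof.
move=> HB H0 w.
have [a0 b0] : sform B v w = 0 /\ sform B w v = 0.
  apply: (@lin_nonneg _ _ (sform B w w)) => t.
  have := HB (fun i => w i + t *: v i); rewrite -/(sform _ _ _) sform_expand H0.
  by rewrite mulr0 addr0.
by [].
Qed.

End Psd.

Section Vec.
Variable C : numClosedFieldType.
Variable n : nat.

Definition ev (i : 'I_n) : 'cV[C]_n := delta_mx i 0.

Lemma e_form (M : 'M[C]_n) i j : (hc (ev i) *m M *m ev j) 0 0 = M i j.
Proof.
rewrite mxE (bigD1 j) //= big1 ?addr0.
  rewrite !mxE eqxx mulr1 (bigD1 i) //= big1 ?addr0.
    by rewrite /hc !mxE !eqxx conjC1 mul1r.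
  by move=> k ki; rewrite /hc !mxE (negbTE ki) conjC0 mul0r.
by move=> k kj; rewrite [ev j k 0]mxE (negbTE kj) mulr0.
Qed.

Lemma mx_ext (M N : 'M[C]_n) :
  (forall i j, (hc (ev i) *m M *m ev j) 0 0 = (hc (ev i) *m N *m ev j) 0 0) ->
  M = N.
Proof. by move=> H; apply/matrixP => i j; rewrite -!e_form H. Qed.

Lemma trcol (y z : 'cV[C]_n) : \tr (z *m hc y) = (hc y *m z) 0 0.
Proof. by rewrite mxtrace_mulC trace_mx11. Qed.

Lemma mx11_mul (u : 'rV[C]_n) (v : 'cV[C]_n) (w : 'rV[C]_n) (x : 'cV[C]_n) :
  (u *m v *m (w *m x)) 0 0 = (u *m v) 0 0 * (w *m x) 0 0.
Proof. by rewrite [LHS]mxE big_ord1. Qed.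

Lemma psd_rank1 k (t : 'I_k -> 'cV[C]_n) : psd_block (fun i j => t i *m hc (t j)).
Proof.
move=> v.
have -> : \sum_(i < k) \sum_(j < k) (hc (v i) *m (t i *m hc (t j)) *m v j) 0 0 =
   (\sum_(i < k) (hc (t i) *m v i) 0 0)^* * \sum_(j < k) (hc (t j) *m v j) 0 0.
  rewrite rmorph_sum mulr_suml; apply: eq_bigr => i _.
  rewrite mulr_sumr; apply: eq_bigr => j _.
  rewrite mulmxA -(mulmxA (hc (v i) *m t i)) mx11_mul.
  congr (_ * _); rewrite !mxE rmorph_sum; apply: eq_bigr => x _.
  by rewrite /hc !mxE rmorphM /= conjCK mulrC.

by rewrite mulrC mul_conjC_ge0.
Qed.

Definition o0 : 'I_3 := @Ordinal 3 0 isT.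
Definition o1 : 'I_3 := @Ordinal 3 1 isT.
Definition o2 : 'I_3 := @Ordinal 3 2 isT.

Lemma sum3 (F : 'I_3 -> C) : \sum_(i < 3) F i = F o0 + F o1 + F o2.
Proof.
rewrite !big_ord_recl big_ord0 addr0 addrA.
by congr (F _ + F _ + F _); apply: val_inj.
Qed.

Definition vec3 (a b c : 'cV[C]_n) (i : 'I_3) : 'cV[C]_n :=
  if val i == 0%N then a else if val i == 1%N then b else c.

Lemma sform3 (B : 'I_3 -> 'I_3 -> 'M[C]_n) a b c a' b' c' :
  sform B (vec3 a b c) (vec3 a' b' c') =
    (hc a *m B o0 o0 *m a') 0 0 + (hc a *m B o0 o1 *m b') 0 0 + (hc a *m B o0 o2 *m c') 0 0
  + ((hc b *m B o1 o0 *m a') 0 0 + (hc b *m B o1 o1 *m b') 0 0 + (hc b *m B o1 o2 *m c') 0 0)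
  + ((hc c *m B o2 o0 *m a') 0 0 + (hc c *m B o2 o1 *m b') 0 0 + (hc c *m B o2 o2 *m c') 0 0).
Proof. by rewrite /sform sum3 !sum3. Qed.

End Vec.
Arguments ev {C n} i.
Arguments vec3 {C n} a b c i.

Section Kraus.
Variable C : numClosedFieldType.
Variables n m : nat.
Variable E : 'I_m -> 'M[C]_n.

Lemma kraus_lin : linear (kraus_map E).
Proof.
move=> a x y; rewrite /kraus_map scaler_sumr -big_split /=; apply: eq_bigr => i _.
by rewrite mulmxDr mulmxDl -scalemxAr -scalemxAl.
Qed.

Lemma kraus_tr rho : \sum_(a < m) hc (E a) *m E a = 1%:M ->
  \tr (kraus_map E rho) = \tr rho.
Proof.
move=> hE; rewrite /kraus_map raddf_sum /=.
under eq_bigr => a _ do rewrite mxtrace_mulC mulmxA.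
by rewrite -raddf_sum /= -mulmx_suml hE mul1mx.
Qed.

End Kraus.

Lemma m00 (C : numClosedFieldType) : (0 : 'M[C]_1) 0 0 = 0.
Proof. by rewrite mxE. Qed.
Lemma mD00 (C : numClosedFieldType) (M N : 'M[C]_1) : (M + N) 0 0 = M 0 0 + N 0 0.
Proof. by rewrite mxE. Qed.
Lemma mN00 (C : numClosedFieldType) (M : 'M[C]_1) : (- M) 0 0 = - M 0 0.
Proof. by rewrite mxE. Qed.

Section Forward.
Variable C : numClosedFieldType.
Variables n m : nat.
Variable P : 'M[C]_n.
Variable E : 'I_m -> 'M[C]_n.
Variable A : 'M[C]_n -> Prop.
Variable R : 'M[C]_n -> 'M[C]_n.
Hypothesis hPP : P *m P = P.
Hypothesis hPh : hc P = P.
Hypothesis hE : \sum_(a < m) hc (E a) *m E a = 1%:M.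
Hypothesis hA : star_subalgebra_of P A.
Hypothesis hRl : linear R.
Hypothesis hRcp : completely_positive R.
Hypothesis hRtp : trace_preserving R.
Let F := fun rho => R (kraus_map E rho).
Hypothesis hcorr : forall X, A X -> P *m dual F X *m P = P *m X *m P.

Lemma A_hc X : A X -> A (hc X).
Proof. by case: hA => _ _ _ h _; apply: h. Qed.
Lemma A_mul X Y : A X -> A Y -> A (X *m Y).
Proof. by case: hA => _ _ h _ _; apply: h. Qed.
Lemma A_PXP X : A X -> X = P *m X *m P.
Proof. by case: hA => _ _ _ _ h; apply: h. Qed.
Lemma A_PX X : A X -> P *m X = X.
Proof. by move=> /A_PXP h; rewrite h !mulmxA hPP. Qed.
Lemma A_XP X : A X -> X *m P = X.
Proof. by move=> /A_PXP h; rewrite h -!mulmxA hPP. Qed.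

Lemma F_lin : linear F.
Proof. by move=> a x y; rewrite /F kraus_lin (lin_add hRl) (linZ hRl). Qed.

Lemma F_tr rho : \tr (F rho) = \tr rho.
Proof. by rewrite /F hRtp kraus_tr. Qed.

Lemma trF Y S : A Y -> \tr (F (P *m S *m P) *m Y) = \tr (S *m Y).
Proof.
move=> AY; rewrite -(dual_tr F_lin).
have -> : \tr (P *m S *m P *m dual F Y) = \tr (S *m (P *m dual F Y *m P)).
  by rewrite -!mulmxA mxtrace_mulC !mulmxA.
by rewrite hcorr // -A_PXP.
Qed.

Lemma yz_form a (u v : 'cV[C]_n) :
  (E a *m P *m u) *m hc (E a *m P *m v) = E a *m (P *m (u *m hc v) *m P) *m hc (E a).
Proof. by rewrite !hcM hPh !mulmxA. Qed.

Lemma sum_tr (Mf : 'I_m -> 'M[C]_n) Y :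
  \sum_(a < m) \tr (R (Mf a) *m Y) = \tr (R (\sum_(a < m) Mf a) *m Y).
Proof. by rewrite (lin_sum hRl) mulmx_suml raddf_sum. Qed.

Lemma sum_kraus (S : 'M[C]_n) :
  \sum_(a < m) E a *m S *m hc (E a) = kraus_map E S.
Proof. by []. Qed.

Definition Qa X (w : 'cV[C]_n) a :=
  let y := E a *m P *m w in let z := E a *m P *m (X *m w) in
  X *m R (y *m hc y) *m hc X - X *m R (y *m hc z) - R (z *m hc y) *m hc X
  + R (z *m hc z).

Lemma Qa_tr X w a : let y := E a *m P *m w in let z := E a *m P *m (X *m w) in
  \tr (Qa X w a) = \tr (R (y *m hc y) *m (hc X *m X)) - \tr (R (y *m hc z) *m X)
     - \tr (R (z *m hc y) *m hc X) + \tr (R (z *m hc z) *m 1%:M).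
Proof.
move=> y z; rewrite /Qa -/y -/z !raddfD !raddfN /= mulmx1.
rewrite -mulmxA mxtrace_mulC -mulmxA.
by rewrite [\tr (X *m _)]mxtrace_mulC.
Qed.

Lemma Qa_tr_sum X w : A X -> \sum_(a < m) \tr (Qa X w a) = 0.
Proof.
move=> AX.
under eq_bigr => a _ do rewrite Qa_tr !yz_form.
rewrite !big_split !sumrN /= !sum_tr !sum_kraus -/(F _) -!/(F _).
have AhX := A_hc AX; have AXX := A_mul AhX AX.
rewrite mulmx1 F_tr !trF // !hcM !mulmxA (A_PX AX).
rewrite -[X *m w *m hc w *m hc X *m P]mulmxA (A_XP (A_hc AX)).
by rewrite subrr sub0r addrC subrr.
Qed.

Definition Bm X (w p : 'cV[C]_n) a : 'I_3 -> 'I_3 -> 'M[C]_n :=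
  let t := vec3 (E a *m P *m w) (E a *m P *m (X *m w)) p in
  fun i j => R (t i *m hc (t j)).

Lemma Bm_psd X w p a : psd_block (Bm X w p a).
Proof. by apply: hRcp; apply: psd_rank1. Qed.

Definition ell X i : 'I_3 -> 'cV[C]_n := vec3 (hc X *m ev i) (- ev i) 0.

Lemma sform_ell X w p a i : sform (Bm X w p a) (ell X i) (ell X i) = Qa X w a i i.
Proof.
rewrite /ell sform3 hc0 !mul0mx !mulmx0 !m00 !addr0 /Qa.
rewrite -[in RHS]e_form /Bm /vec3 /= !hcM !hcK !hcN !mulmxN !mulNmx !(mulmxDr, mulmxDl, mulmxBr, mulmxBl) !(mD00, mN00) !mulmxA.
rewrite !mulmxN !mulNmx !mN00 !mulmxA; ring.
Qed.

Lemma Qa_zero X w a i : A X -> Qa X w a i i = 0.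
Proof.
move=> AX.
have ge0 : forall a i, 0 <= Qa X w a i i.
  by move=> a' i'; rewrite -(sform_ell X w 0); apply: psd_sform; apply: Bm_psd.
have H : \sum_(a < m) \sum_(i < n) Qa X w a i i = 0 by exact: (Qa_tr_sum w AX).
have H2 : \sum_(i < n) Qa X w a i i = 0.
  by apply: (psumr_eq0P _ H) => // a' _; apply: sumr_ge0 => i' _; exact: ge0.
by apply: (psumr_eq0P _ H2) => // i' _; exact: ge0.
Qed.

Definition ellk k : 'I_3 -> 'cV[C]_n := vec3 0 0 (ev k).

Lemma key_r X (w p : 'cV[C]_n) a : A X ->
  R (p *m hc (E a *m P *m w)) *m hc X = R (p *m hc (E a *m P *m (X *m w))).
Proof.
move=> AX; apply: mx_ext => k i.
have [H _] := psd_kernel (Bm_psd X w p a)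
   (etrans (sform_ell X w p a i) (Qa_zero w a i AX)) (ellk k).
move: H; rewrite /ellk /ell sform3 hc0 !mul0mx !mulmx0 !m00 !add0r !addr0.
rewrite /Bm /vec3 /= !mulmxN !mN00 !mulmxA => /eqP; rewrite subr_eq0 => /eqP.
by [].
Qed.

Lemma key_l X (w p : 'cV[C]_n) a : A X ->
  X *m R ((E a *m P *m w) *m hc p) = R ((E a *m P *m (X *m w)) *m hc p).
Proof.
move=> AX; apply: mx_ext => i k.
have [_ H] := psd_kernel (Bm_psd X w p a)
   (etrans (sform_ell X w p a i) (Qa_zero w a i AX)) (ellk k).
move: H; rewrite /ellk /ell sform3 hc0 !mul0mx !mulmx0 !m00 !add0r !addr0.
rewrite /Bm /vec3 /= !hcM !hcK !hcN !mulNmx !mN00 !mulmxA => /eqP.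
by rewrite subr_eq0 => /eqP.
Qed.

Lemma forward_comm X b c : A X ->
  (P *m hc (E c) *m E b *m P) *m X = X *m (P *m hc (E c) *m E b *m P).
Proof.
move=> AX; apply: mx_ext => k l.
set p := E c *m P *m ev k.
set y := E b *m P *m ev l.
set z := E b *m P *m (X *m ev l).
set p' := E c *m P *m (hc X *m ev k).
have -> : (hc (ev k) *m (P *m hc (E c) *m E b *m P *m X) *m ev l) 0 0 = (hc p *m z) 0 0.
  by rewrite /p /z !hcM hPh !mulmxA.
have -> : (hc (ev k) *m (X *m (P *m hc (E c) *m E b *m P)) *m ev l) 0 0 = (hc p' *m y) 0 0.
  by rewrite /p' /y !hcM hPh hcK !mulmxA.
rewrite -(trcol p z) -(trcol p' y) -hRtp -(@key_l X (ev l) p b AX) mxtrace_mulC -{1}(hcK X) (@key_r (hc X) (ev k) y c (A_hc AX)).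
by rewrite hRtp.
Qed.

End Forward.

Section Interp.
Variable C : numClosedFieldType.

Lemma interp (s : seq C) (f : C -> C) :
  exists p : {poly C}, forall x, x \in s -> p.[x] = f x.
Proof.
elim: s => [|x s [p Hp]]; first by exists 0.
case: (boolP (x \in s)) => xs.
  by exists p => y; rewrite inE => /orP [/eqP -> | ys]; apply: Hp.
set q := \prod_(y <- s) ('X - y%:P).
have qx : q.[x] != 0.
  rewrite horner_prod prodf_seq_neq0; apply/allP => y ys /=.
  by rewrite hornerXsubC subr_eq0; apply: contraNneq xs => ->.
exists (p + ((f x - p.[x]) / q.[x]) *: q) => y; rewrite inE hornerD hornerZ.
case/orP => [/eqP -> | ys]; first by rewrite mulfVK // addrC subrK.
have -> : q.[y] = 0.
  apply/eqP; rewrite horner_prod prodf_seq_eq0; apply/hasP; exists y => //.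
  by rewrite /= hornerXsubC subrr.
by rewrite mulr0 addr0 Hp.
Qed.

End Interp.

Section Ld.
Variable C : numClosedFieldType.
Variable n : nat.
Variable V : 'M[C]_n.
Hypothesis hV1 : V *m hc V = 1%:M.
Hypothesis hV2 : hc V *m V = 1%:M.

Definition Ld (h : 'rV[C]_n) := hc V *m diag_mx h *m V.

Lemma Ld_mul a b : Ld a *m Ld b = Ld (\row_j (a 0 j * b 0 j)).
Proof.
rewrite /Ld -mulmx_diag !mulmxA; congr (_ *m _).
by rewrite -(mulmxA (hc V *m diag_mx a) V) hV1 mulmx1.
Qed.

Lemma Ld_add a b : Ld a + Ld b = Ld (a + b).
Proof.
rewrite /Ld -mulmxDl -mulmxDr; congr (_ *m _ *m _).
by apply/matrixP => i j; rewrite !mxE mulrnDl.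
Qed.

Lemma Ld_scale c a : c *: Ld a = Ld (c *: a).
Proof.
rewrite /Ld scalemxAl scalemxAr; congr (_ *m _ *m _).
by apply/matrixP => i j; rewrite !mxE mulrnAr.
Qed.

Lemma Ld_const c : Ld (const_mx c) = c%:M.
Proof. by rewrite /Ld diag_const_mx mul_mx_scalar -scalemxAl hV2 scalemx1. Qed.

Lemma Ld_sum (I : Type) (r : seq I) (F : I -> 'rV[C]_n) :
  \sum_(i <- r) Ld (F i) = Ld (\sum_(i <- r) F i).
Proof.
elim: r => [|x r IH]; first by rewrite !big_nil /Ld raddf0 mulmx0 mul0mx.
by rewrite !big_cons IH Ld_add.
Qed.

Lemma hc_diag (h : 'rV[C]_n) : hc (diag_mx h) = diag_mx (map_mx Num.conj h).
Proof.
apply/matrixP => i j; rewrite /hc !mxE.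
by case: (eqVneq i j) => [->|nij]; rewrite ?eqxx ?(negbTE nij) /= ?mulr1n ?mulr0n ?conjC0.
Qed.

Lemma hc_Ld h : hc (Ld h) = Ld (map_mx Num.conj h).
Proof. by rewrite /Ld !hcM hcK hc_diag mulmxA. Qed.

End Ld.

Section Gen.
Variable C : numClosedFieldType.
Variable n : nat.

Lemma psd_conj k (L : 'M[C]_n) (B : 'I_k -> 'I_k -> 'M[C]_n) :
  psd_block B -> psd_block (fun i j => L *m B i j *m hc L).
Proof.
move=> H v; have := H (fun i => hc L *m v i).
congr (0 <= _); apply: eq_bigr => i _; apply: eq_bigr => j _.
by rewrite hcM hcK !mulmxA.
Qed.

Lemma psd_add k (B1 B2 : 'I_k -> 'I_k -> 'M[C]_n) :
  psd_block B1 -> psd_block B2 -> psd_block (fun i j => B1 i j + B2 i j).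
Proof.
move=> H1 H2 v; have := addr_ge0 (H1 v) (H2 v); rewrite -big_split /=.
congr (0 <= _); apply: eq_bigr => i _; rewrite -big_split /=; apply: eq_bigr => j _.
by rewrite mulmxDr mulmxDl mD00.
Qed.

Lemma psd_sum k m (B : 'I_m -> 'I_k -> 'I_k -> 'M[C]_n) :
  (forall c, psd_block (B c)) -> psd_block (fun i j => \sum_(c < m) B c i j).
Proof.
move=> H v.
have -> : \sum_(i < k) \sum_(j < k) (hc (v i) *m (\sum_(c < m) B c i j) *m v j) 0 0 =
   \sum_(c < m) \sum_(i < k) \sum_(j < k) (hc (v i) *m B c i j *m v j) 0 0.
  rewrite [RHS]exchange_big; apply: eq_bigr => i _; rewrite [RHS]exchange_big.
  apply: eq_bigr => j _; rewrite mulmx_sumr mulmx_suml summxE; by [].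
by apply: sumr_ge0 => c _; apply: H.
Qed.

Lemma kraus_cp m (L : 'I_m -> 'M[C]_n) : completely_positive (kraus_map L).
Proof.
move=> k B HB; rewrite /kraus_map; apply: psd_sum => c; exact: psd_conj.
Qed.

Lemma kraus_tr_gen m (L : 'I_m -> 'M[C]_n) rho :
  \tr (kraus_map L rho) = \tr ((\sum_(a < m) hc (L a) *m L a) *m rho).
Proof.
rewrite /kraus_map mulmx_suml !raddf_sum /=; apply: eq_bigr => a _.
by rewrite mxtrace_mulC mulmxA.
Qed.

Lemma kraus_dual_tr m (L : 'I_m -> 'M[C]_n) rho X :
  \tr (kraus_map L rho *m X) = \tr (rho *m \sum_(a < m) hc (L a) *m X *m L a).
Proof.
rewrite /kraus_map mulmx_suml mulmx_sumr !raddf_sum /=; apply: eq_bigr => a _.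
by rewrite -!mulmxA mxtrace_mulC !mulmxA.
Qed.

Lemma comp_lin (f g : 'M[C]_n -> 'M[C]_n) : linear f -> linear g ->
  linear (fun x => f (g x)).
Proof. by move=> lf lg a x y; rewrite lg (lin_add lf) (linZ lf). Qed.

Lemma psd_diag (N : 'M[C]_n) j : 0 <= (N *m hc N) j j.
Proof.
rewrite mxE; apply: sumr_ge0 => k _; rewrite /hc !mxE; exact: mul_conjC_ge0.
Qed.

Lemma tr_hc_ge0 (Y : 'M[C]_n) : 0 <= \tr (Y *m hc Y).
Proof. by apply: sumr_ge0 => j _; apply: psd_diag. Qed.

Lemma tr_hc_zero (Y : 'M[C]_n) : \tr (Y *m hc Y) = 0 -> Y = 0.
Proof.
move=> H; apply/matrixP => j k; rewrite mxE.
have H1 : (Y *m hc Y) j j = 0.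
  by apply: (psumr_eq0P _ H) => // i _; apply: psd_diag.
move: H1; rewrite mxE => H2.
have : Y j k * (Y j k)^* = 0.
  move: (psumr_eq0P (P := predT) (F := fun l => Y j l * hc Y l j)) => H3.
  rewrite -(H3 _ H2 k) //; first by rewrite /hc !mxE.
  by move=> l _; rewrite /hc !mxE; exact: mul_conjC_ge0.
by move/eqP; rewrite mul_conjC_eq0 => /eqP.
Qed.

End Gen.

Section Backward.
Variable C : numClosedFieldType.
Variables n m : nat.
Variable P : 'M[C]_n.
Variable E : 'I_m -> 'M[C]_n.
Variable A : 'M[C]_n -> Prop.
Hypothesis hPP : P *m P = P.
Hypothesis hPh : hc P = P.
Hypothesis hE : \sum_(a < m) hc (E a) *m E a = 1%:M.
Hypothesis hA : star_subalgebra_of P A.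
Hypothesis hcomm : forall X, A X -> forall b c : 'I_m,
      (P *m hc (E c) *m E b *m P) *m X = X *m (P *m hc (E c) *m E b *m P).

Lemma B_PXP X : A X -> X = P *m X *m P.
Proof. by case: hA => _ _ _ _ h; apply: h. Qed.
Lemma B_XP X : A X -> X *m P = X.
Proof. by move=> /B_PXP h; rewrite h -!mulmxA hPP. Qed.

Definition G := \sum_(b < m) E b *m P *m hc (E b).

Definition good (Y : 'M[C]_n) := forall a c X, A X ->
  (P *m hc (E a) *m Y *m E c *m P) *m X = X *m (P *m hc (E a) *m Y *m E c *m P).

Lemma good1 : good 1%:M.
Proof. by move=> a c X AX; rewrite mulmx1 hcomm. Qed.

Lemma good0 : good 0.
Proof. by move=> a c X AX; rewrite mulmx0 !mul0mx mulmx0. Qed.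

Lemma goodD Y1 Y2 : good Y1 -> good Y2 -> good (Y1 + Y2).
Proof.
move=> h1 h2 a c X AX.
by rewrite mulmxDr !mulmxDl h1 // h2 // mulmxDr.
Qed.

Lemma goodZ k Y : good Y -> good (k *: Y).
Proof.
move=> h a c X AX.
by rewrite -!scalemxAr -!scalemxAl h // -scalemxAr.
Qed.

Lemma comm_mul (S1 S2 X : 'M[C]_n) : S1 *m X = X *m S1 -> S2 *m X = X *m S2 ->
  (S1 *m S2) *m X = X *m (S1 *m S2).
Proof. by move=> h1 h2; rewrite -mulmxA h2 mulmxA h1 mulmxA. Qed.

Lemma comm_sum (I : Type) (r : seq I) (S : I -> 'M[C]_n) X :
  (forall i, S i *m X = X *m S i) ->
  (\sum_(i <- r) S i) *m X = X *m (\sum_(i <- r) S i).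
Proof.
move=> h; rewrite mulmx_suml mulmx_sumr; apply: eq_bigr => i _; exact: h.
Qed.

Lemma goodG Y : good Y -> good (G *m Y).
Proof.
move=> h a c X AX.
have -> : P *m hc (E a) *m (G *m Y) *m E c *m P =
   \sum_(b < m) (P *m hc (E a) *m E b *m P) *m (P *m hc (E b) *m Y *m E c *m P).
  rewrite /G !mulmx_suml !mulmx_sumr !mulmx_suml; apply: eq_bigr => b _.
  by rewrite !mulmxA -(mulmxA _ P P) hPP.
apply: comm_sum => b; apply: comm_mul; [exact: hcomm | exact: h].
Qed.

Definition mpow i := iter i (mulmx G) 1%:M.

Lemma good_mpow i : good (mpow i).
Proof. elim: i => [|i IH] /=; [exact: good1 | exact: goodG]. Qed.

Definition peval (p : {poly C}) := \sum_(i < size p) p`_i *: mpow i.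

Lemma good_peval p : good (peval p).
Proof.
rewrite /peval; elim/big_ind: _ => //; [exact: good0 | exact: goodD |].
move=> i _; apply: goodZ; exact: good_mpow.
Qed.

Lemma hcG : hc G = G.
Proof.
rewrite /G hc_sum; apply: eq_bigr => b _; by rewrite !hcM hcK hPh !mulmxA.
Qed.

Let V := spectralmx G.
Let d := spectral_diag G.

Lemma hV1 : V *m hc V = 1%:M.
Proof. by rewrite hc_tstar; apply/unitarymxP; apply: spectral_unitarymx. Qed.
Lemma hV2 : hc V *m V = 1%:M.
Proof. exact: mulmx1C hV1. Qed.

Lemma G_Ld : G = Ld V d.
Proof.
have nG : G \is normalmx by apply/normalmxP; rewrite -hc_tstar hcG.
rewrite /Ld {1}(orthomx_spectralP nG) invmx_unitary ?spectral_unitarymx //.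
by rewrite -hc_tstar.
Qed.

Lemma mpow_Ld i : mpow i = Ld V (\row_j (d 0 j ^+ i)).
Proof.
elim: i => [|i IH] /=.
  rewrite -(Ld_const hV2); congr (Ld V _); apply/matrixP => k j; by rewrite !mxE expr0.
rewrite -/(mpow i) IH {1}G_Ld (Ld_mul hV1); congr (Ld V _).
by apply/matrixP => k j; rewrite !mxE exprS.
Qed.

Lemma peval_Ld p : peval p = Ld V (\row_j p.[d 0 j]).
Proof.
rewrite /peval.
under eq_bigr => i _ do rewrite mpow_Ld Ld_scale.
rewrite Ld_sum; congr (Ld V _); apply/matrixP => k j.
rewrite summxE mxE horner_coef; apply: eq_bigr => i _; by rewrite !mxE.
Qed.

Lemma d_ge0 j : 0 <= d 0 j.
Proof.
have hD : V *m G *m hc V = diag_mx d.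
  by rewrite G_Ld /Ld !mulmxA hV1 mul1mx -mulmxA hV1 mulmx1.
have : (V *m G *m hc V) j j = d 0 j by rewrite hD mxE eqxx mulr1n.
move=> <-; rewrite /G mulmx_sumr mulmx_suml summxE; apply: sumr_ge0 => b _.
have -> : V *m (E b *m P *m hc (E b)) *m hc V = (V *m E b *m P) *m hc (V *m E b *m P).
  by rewrite !hcM hPh !mulmxA -(mulmxA _ P P) hPP.
exact: psd_diag.
Qed.

Definition fh (x : C) := (sqrtC x)^-1.

Lemma fh_ge0 x : 0 <= x -> 0 <= fh x.
Proof. by move=> x0; rewrite /fh invr_ge0 sqrtC_ge0. Qed.

Lemma fh_delta x : fh x * x * fh x = x / x.
Proof.
by rewrite /fh mulrAC -expr2 exprVn sqrtCK mulrC.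
Qed.

Lemma exists_Z : exists Z, good Z /\ Z = Ld V (\row_j fh (d 0 j)).
Proof.
have [p Hp] := interp [seq d 0 j | j <- enum 'I_n] fh.
exists (peval p); split; first exact: good_peval.
rewrite peval_Ld; congr (Ld V _); apply/matrixP => k j; rewrite !mxE.
by apply: Hp; apply: map_f; rewrite mem_enum.
Qed.

Section WithZ.
Variable Z : 'M[C]_n.
Hypothesis hZ : Z = Ld V (\row_j fh (d 0 j)).

Lemma hcZ' : hc Z = Z.
Proof.
rewrite hZ hc_Ld; congr (Ld V _); apply/matrixP => k j; rewrite !mxE.
by rewrite geC0_conj // fh_ge0 // d_ge0.
Qed.

Definition Pi := locked (Z *m G *m Z).
Lemma PiE : Pi = Z *m G *m Z. Proof. by rewrite /Pi -lock. Qed.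

Lemma Pi_Ld : Pi = Ld V (\row_j (d 0 j / d 0 j)).
Proof.
rewrite PiE hZ.
have -> : Ld V (\row_j fh (d 0 j)) *m G = Ld V (\row_j fh (d 0 j)) *m Ld V d.
  by rewrite -G_Ld.
rewrite !(Ld_mul hV1); congr (Ld V _).
by apply/matrixP => k j; rewrite !mxE fh_delta.
Qed.

Lemma hcPi : hc Pi = Pi.
Proof. by rewrite PiE !hcM hcZ' hcG mulmxA. Qed.

Lemma PiPi : Pi *m Pi = Pi.
Proof.
rewrite Pi_Ld (Ld_mul hV1); congr (Ld V _); apply/matrixP => k j; rewrite !mxE.
have [->|dn0] := eqVneq (d 0 j) 0; first by rewrite !mul0r.
by rewrite (divff dn0) mulr1.
Qed.

Lemma PiG : Pi *m G = G.
Proof.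
rewrite Pi_Ld.
have -> : Ld V (\row_j (d 0 j / d 0 j)) *m G = Ld V (\row_j (d 0 j / d 0 j)) *m Ld V d.
  by rewrite -G_Ld.
rewrite [RHS]G_Ld (Ld_mul hV1); congr (Ld V _); apply/matrixP => k j; rewrite !mxE.
rewrite (ord1 k); have [->|dn0] := eqVneq (d 0 j) 0; first by rewrite !mul0r.
by rewrite (divff dn0) mul1r.

Qed.

Definition Kc := locked (1%:M - Pi).
Lemma KcE : Kc = 1%:M - Pi. Proof. by rewrite /Kc -lock. Qed.

Lemma hcKc : hc Kc = Kc.
Proof. by rewrite KcE hcB hc1 hcPi. Qed.

Lemma KcKc : Kc *m Kc = Kc.
Proof.
by rewrite KcE mulmxBl mul1mx mulmxBr mulmx1 PiPi subrr subr0.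
Qed.

Lemma KcEP b : Kc *m E b *m P = 0.
Proof.
apply: tr_hc_zero.
have H : \sum_(b < m) \tr ((Kc *m E b *m P) *m hc (Kc *m E b *m P)) = 0.
  rewrite -raddf_sum /=.
  have -> : \sum_(b < m) (Kc *m E b *m P) *m hc (Kc *m E b *m P) = Kc *m G *m Kc.
    rewrite /G mulmx_sumr mulmx_suml; apply: eq_bigr => b' _.
    by rewrite !hcM hcKc hPh !mulmxA -(mulmxA _ P P) hPP.
  by rewrite KcE mulmxBl mul1mx PiG subrr mul0mx mxtrace0.
by apply: (psumr_eq0P _ H) => // b' _; apply: tr_hc_ge0.
Qed.

Lemma KcEP' (M : 'M[C]_n) b : M *m Kc *m E b *m P = 0.
Proof. by rewrite -!mulmxA [Kc *m (E b *m P)]mulmxA KcEP mulmx0. Qed.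

Lemma PiEP b : Pi *m E b *m P = E b *m P.
Proof.
by apply/eqP; rewrite eq_sym -subr_eq0 -mulmxA -{1}(mul1mx (E b *m P)) -mulmxBl -KcE mulmxA KcEP.
Qed.

Definition Rk (c : 'I_m) := P *m hc (E c) *m Z.

Lemma hcRk c : hc (Rk c) = Z *m E c *m P.
Proof. by rewrite /Rk !hcM hcK hPh hcZ' mulmxA. Qed.

Lemma sumRk : \sum_(c < m) hc (Rk c) *m Rk c = Pi.
Proof.
rewrite PiE /G mulmx_sumr mulmx_suml; apply: eq_bigr => c _.
by rewrite hcRk /Rk !mulmxA -(mulmxA _ P P) hPP.
Qed.

Definition Rmap (s : 'M[C]_n) := kraus_map Rk s + Kc *m s *m hc Kc.

Lemma Rmap_lin : linear Rmap.
Proof.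
move=> a x y; rewrite /Rmap kraus_lin mulmxDr mulmxDl -scalemxAr -scalemxAl.
by rewrite scalerDr addrACA.
Qed.

Lemma Rmap_cp : completely_positive Rmap.
Proof.
move=> k B HB.
apply: (psd_add (B1 := fun i j => kraus_map Rk (B i j))
                (B2 := fun i j => Kc *m B i j *m hc Kc)).
  exact: kraus_cp.
exact: psd_conj.
Qed.

Lemma Rmap_tp : trace_preserving Rmap.
Proof.
move=> s; rewrite /Rmap raddfD /= kraus_tr_gen sumRk.
have -> : \tr (Kc *m s *m hc Kc) = \tr (Kc *m s).
  by rewrite hcKc mxtrace_mulC mulmxA KcKc.
by rewrite -mxtraceD -mulmxDl KcE addrC subrK mul1mx.
Qed.

Lemma Rmap_channel : channel Rmap.
Proof. split; [exact: Rmap_lin | split; [exact: Rmap_cp | exact: Rmap_tp]]. Qed.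

Hypothesis goodZ : good Z.

Lemma Rmap_dual_tr t X :
  \tr (Rmap t *m X) =
  \tr (t *m (\sum_(c < m) hc (Rk c) *m X *m Rk c + hc Kc *m X *m Kc)).
Proof.
rewrite /Rmap mulmxDl mulmxDr !mxtraceD kraus_dual_tr; congr (_ + _).
by rewrite -!mulmxA mxtrace_mulC !mulmxA.
Qed.

Lemma correction X : A X ->
  P *m dual (fun rho => Rmap (kraus_map E rho)) X *m P = P *m X *m P.
Proof.
move=> AX.
set Y := \sum_(c < m) hc (Rk c) *m X *m Rk c + hc Kc *m X *m Kc.
rewrite (@dual_unique C n (fun rho => Rmap (kraus_map E rho)) X
           (\sum_(a < m) hc (E a) *m Y *m E a)); last first.
  by move=> rho; rewrite Rmap_dual_tr kraus_dual_tr.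
rewrite -(B_PXP AX).
have -> : P *m (\sum_(a < m) hc (E a) *m Y *m E a) *m P =
   \sum_(a < m) \sum_(c < m)
      (P *m hc (E a) *m Z *m E c *m P) *m X *m (P *m hc (E c) *m Z *m E a *m P).
  rewrite mulmx_sumr mulmx_suml; apply: eq_bigr => a _.
  have hK : P *m (hc (E a) *m (hc Kc *m X *m Kc) *m E a) *m P = 0 by rewrite !mulmxA KcEP'.
  rewrite /Y mulmxDr mulmxDl mulmxDr mulmxDl hK addr0.
  rewrite !(mulmx_sumr, mulmx_suml); apply: eq_bigr => c _.
  by rewrite hcRk /Rk !mulmxA.
have -> : \sum_(a < m) \sum_(c < m)
      (P *m hc (E a) *m Z *m E c *m P) *m X *m (P *m hc (E c) *m Z *m E a *m P) =
   \sum_(a < m) X *m (P *m hc (E a) *m E a *m P).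
  apply: eq_bigr => a _.
  under eq_bigr => c _ do rewrite goodZ // -mulmxA.
  rewrite -mulmx_sumr; congr (X *m _).
  have -> : \sum_(c < m) (P *m hc (E a) *m Z *m E c *m P) *m (P *m hc (E c) *m Z *m E a *m P)
      = P *m hc (E a) *m Pi *m E a *m P.
    rewrite PiE /G !(mulmx_sumr, mulmx_suml); apply: eq_bigr => c _.
    by rewrite !mulmxA -(mulmxA _ P P) hPP.
  by rewrite -!mulmxA [Pi *m (E a *m P)]mulmxA PiEP.
rewrite -mulmx_sumr.
have -> : \sum_(a < m) P *m hc (E a) *m E a *m P = P.
  rewrite -mulmx_suml.
  have -> : \sum_(a < m) P *m hc (E a) *m E a = P *m \sum_(a < m) hc (E a) *m E a.
    by rewrite mulmx_sumr; apply: eq_bigr => a _; rewrite mulmxA.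
  by rewrite hE mulmx1 hPP.
exact: B_XP.
Qed.

End WithZ.

Theorem backward : exists R : 'M[C]_n -> 'M[C]_n,
  channel R /\ forall X, A X ->
    P *m dual (fun rho => R (kraus_map E rho)) X *m P = P *m X *m P.
Proof.
have [Z [gZ hZ]] := exists_Z.
exists (Rmap Z); split; first exact: Rmap_channel.
by move=> X AX; apply: correction.
Qed.

End Backward.

Theorem theorem2 (C : numClosedFieldType) (n m : nat)
    (P : 'M[C]_n) (E : 'I_m -> 'M[C]_n) (A : 'M[C]_n -> Prop) :
  orth_proj P ->
  \sum_(a < m) hc (E a) *m E a = 1%:M ->
  star_subalgebra_of P A ->
  (exists R : 'M[C]_n -> 'M[C]_n,
      channel R /\
      forall X, A X ->
        P *m dual (fun rho => R (kraus_map E rho)) X *m P = P *m X *m P)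
  <->
  (forall X, A X -> forall b c : 'I_m,
      (P *m hc (E c) *m E b *m P) *m X = X *m (P *m hc (E c) *m E b *m P)).
Proof.
move=> [hPP hPh] hE hA; split.
  move=> [R [[hRl [hRcp hRtp]] hcorr]] X AX b c.
  exact: (forward_comm hPP hPh hE hA hRl hRcp hRtp hcorr b c AX).
move=> hcomm; exact: (backward hPP hPh hE hA hcomm).
Qed.
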